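(* Fix $p\in(0,1)$ and let $\Phi_{\mathsf{Even}}=\sum_{v\in\mathsf{Even}}2^{-N_p(v)}$, $\Phi_{\mathsf{Odd}}=\sum_{v\in\mathsf{Odd}}2^{-N_p(v)}$. Then: 1. $\mathbb E[\Phi_{\mathsf{Even}}]=\mathbb E[\Phi_{\mathsf{Odd}}]=\tfrac12(2-p)^d$; 2. $\mathrm{Var}(\Phi_{\mathsf{Even}})=\mathrm{Var}(\Phi_{\mathsf{Odd}})=\tfrac12(\tfrac{4-3p}{2})^d(1-o(1))$ as $d\to\infty$; 3. $\mathrm{Cov}(\Phi_{\mathsf{Even}},\Phi_{\mathsf{Odd}})/\mathrm{Var}(\Phi_{\mathsf{Even}})$ decays exponentially in $d$.
   Context: Setup: - $Q_d=\{0,1\}^d$ is the hypercube graph. - $\mathsf{Even}$ and $\mathsf{Odd}$ are the vertices of even and odd Hamming weight. - $Q_{d,p}$ is obtained by retaining each edge independently with probability $p$. - $N_p(v)$ is the number of neighbors of $v$ in $Q_{d,p}$. *)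

(* Defs.v *)
From HB Require Import structures.
From mathcomp Require Import all_boot all_order all_algebra.
From mathcomp Require Import all_classical all_reals all_analysis.
Set Implicit Arguments. Unset Strict Implicit. Unset Printing Implicit Defensive.
Import Order.TTheory GRing.Theory Num.Theory.
Local Open Scope ring_scope.

Definition cube (d : nat) := {ffun 'I_d -> bool}.

Definition hweight d (v : cube d) : nat := #|[set i | v i]|.
Definition is_even d (v : cube d) : bool := ~~ odd (hweight v).

Definition flip d (v : cube d) (i : 'I_d) : cube d :=
  [ffun j => if j == i then ~~ v j else v j].

(* An edge of Q_d is encoded by its lower endpoint u and direction i, with u i = false:
   it joins u and flip u i.  The set of all edges of Q_d: *)
Definition hedges d : {set cube d * 'I_d} := [set e : cube d * 'I_d | ~~ e.1 e.2].

Definition edge_of d (v : cube d) (i : 'I_d) : cube d * 'I_d :=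
  (if v i then flip v i else v, i).

(* Outcomes of Q_{d,p}: sets of retained edges (omega \subset hedges d).
   Probability weight of an outcome: each edge kept independently with prob. p. *)
Definition pw (R : realType) (p : R) d (om : {set cube d * 'I_d}) : R :=
  if om \subset hedges d
  then p ^+ #|om| * (1 - p) ^+ (#|hedges d| - #|om|)
  else 0.

Definition Ex (R : realType) (p : R) d (X : {set cube d * 'I_d} -> R) : R :=
  \sum_(om : {set cube d * 'I_d}) pw p om * X om.

Definition Cov (R : realType) (p : R) d (X Y : {set cube d * 'I_d} -> R) : R :=
  Ex p (fun om => X om * Y om) - Ex p X * Ex p Y.

Definition Var (R : realType) (p : R) d (X : {set cube d * 'I_d} -> R) : R :=
  Cov p X X.

Definition Np d (om : {set cube d * 'I_d}) (v : cube d) : nat :=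
  #|[set i : 'I_d | edge_of v i \in om]|.

Definition PhiEven (R : realType) d (om : {set cube d * 'I_d}) : R :=
  \sum_(v : cube d | is_even v) (2 : R) ^- Np om v.
Definition PhiOdd (R : realType) d (om : {set cube d * 'I_d}) : R :=
  \sum_(v : cube d | ~~ is_even v) (2 : R) ^- Np om v.

(* Main.v *)
Require Import Defs.
From HB Require Import structures.
From mathcomp Require Import all_boot all_order all_algebra.
From mathcomp Require Import all_classical all_reals all_analysis.
From mathcomp Require Import ring lra.
Import Order.TTheory GRing.Theory Num.Theory numFieldNormedType.Exports.
Local Open Scope classical_set_scope.
Local Open Scope ring_scope.

Lemma Ex_core (R : realType) (p : R) (T : finType) (H : {set T}) (g : T -> R) :
  \sum_(om : {set T}) (if om \subset H then p ^+ #|om| * (1 - p) ^+ (#|H| - #|om|) else 0)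
     * \prod_(e in om) g e
  = \prod_(e in H) (p * g e + (1 - p)).
Proof.
pose G i (b : bool) := if b then (if i \in H then p * g i else 0)
                       else (if i \in H then 1 - p else 1).
have step1 : forall om : {set T}, \prod_i G i (i \in om) =
  (if om \subset H then p ^+ #|om| * (1 - p) ^+ (#|H| - #|om|) else 0)
     * \prod_(e in om) g e.
  move=> om; rewrite (bigID (fun i => i \in om)) /=.
  rewrite [in LHS](eq_bigr (fun i => if i \in H then p * g i else 0)); last first.
    by move=> i iom; rewrite /G iom.
  rewrite [X in _ * X = _](eq_bigr (fun i => if i \in H then 1 - p else 1)); last first.
    by move=> i /negbTE iom; rewrite /G iom.
  case: (boolP (om \subset H)) => sub.
    rewrite (eq_bigr (fun i => p * g i)); last by move=> i /(fintype.subsetP sub) ->.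
    rewrite big_split /= prodr_const -big_mkcondr /=.
    rewrite [X in _ * X = _](eq_bigl (fun i => i \in H :\: om)); last by move=> i; rewrite !inE andbC.
    rewrite prodr_const cardsD (finset.setIidPr sub).
    by rewrite mulrAC mulrC !mulrA.
  have [i iom iH] := fintype.subsetPn sub.
  by rewrite (bigD1 i) //= (negbTE iH) !mul0r.
have step2 : \prod_(e in H) (p * g e + (1 - p)) = \prod_i \sum_b G i b.
  rewrite [RHS](eq_bigr (fun i => if i \in H then p * g i + (1 - p) else 1)); last first.
    by move=> i _; rewrite big_bool /G /=; case: (i \in H) => //; rewrite add0r.
  by rewrite -big_mkcond.
rewrite step2 (eq_bigr _ (fun om _ => esym (step1 om))) bigA_distr_bigA /=.
rewrite (reindex (fun f : {ffun T -> bool} => finset (fun i => f i))) /=.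
  by apply: eq_bigr => f _; apply: eq_bigr => i _; rewrite inE.
exists (fun A : {set T} => [ffun i => i \in A]) => [f _|A _].
  by apply/ffunP => i; rewrite ffunE inE.
by apply/setP => i; rewrite inE ffunE.
Qed.

Local Close Scope classical_set_scope.
Set Implicit Arguments. Unset Strict Implicit.

Lemma Ex_prodg (R : realType) (p : R) d (g : cube d * 'I_d -> R) :
  Ex p (fun om => \prod_(e in om) g e) = \prod_(e in hedges d) (p * g e + (1 - p)).
Proof. by rewrite /Ex /pw; exact: Ex_core. Qed.

Definition Y (R : realType) d (S : {set cube d * 'I_d}) (om : {set cube d * 'I_d}) : R :=
  \prod_(e in om) (if e \in S then 2^-1 else 1).

Definition inc d (v : cube d) : {set cube d * 'I_d} := edge_of v @: [set: 'I_d].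

Lemma edge_inj d (v : cube d) : injective (edge_of v).
Proof. by move=> i j /(congr1 snd). Qed.

Lemma inc_sub d (v : cube d) : inc v \subset hedges d.
Proof.
apply/fintype.subsetP => e /imsetP [i _ ->]; rewrite inE /edge_of /=.
case: ifP => [vi|-> //]; by rewrite /flip ffunE eqxx vi.
Qed.

Lemma card_inc d (v : cube d) : #|inc v| = d.
Proof. by rewrite card_imset ?cardsT ?card_ord //; exact: edge_inj. Qed.

Lemma Np_card d om (v : cube d) : Np om v = #|om :&: inc v|.
Proof.
have -> : om :&: inc v = edge_of v @: [set i | edge_of v i \in om].
  apply/finset.setP => e; rewrite inE; apply/andP/imsetP => [[eom /imsetP [i _ ei]]|[i]].
    by exists i => //; rewrite inE -ei.
  by rewrite inE => eom ->; split => //; apply: imset_f.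
by rewrite card_imset //; exact: edge_inj.
Qed.

Lemma X_Y (R : realType) d om (v : cube d) : (2 : R) ^- Np om v = Y R (inc v) om.
Proof.
rewrite Np_card /Y -big_mkcondr /= -exprVn.
rewrite (eq_bigl (fun e => e \in om :&: inc v)); last by move=> e; rewrite inE.
by rewrite prodr_const.
Qed.

Lemma prod_ind (R : realType) (T : finType) (H S : {set T}) (c : R) :
  S \subset H -> \prod_(e in H) (if e \in S then c else 1) = c ^+ #|S|.
Proof.
move=> sub; rewrite -big_mkcondr /= (eq_bigl (fun e => e \in S)) ?prodr_const //.
by move=> e; apply/andP/idP => [[]//|eS]; split => //; apply: (fintype.subsetP sub).
Qed.

Lemma EY2 (R : realType) (p : R) d (U V : {set cube d * 'I_d}) :
  U \subset hedges d -> V \subset hedges d ->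
  Ex p (fun om => Y R U om * Y R V om) =
  (p * (2^-1 * 2^-1) + (1 - p)) ^+ #|U :&: V| *
  (p * 2^-1 + (1 - p)) ^+ #|U :\: V| * (p * 2^-1 + (1 - p)) ^+ #|V :\: U|.
Proof.
move=> sU sV.
have -> : (fun om => Y R U om * Y R V om) = (fun om => \prod_(e in om)
    ((if e \in U then 2^-1 else 1) * (if e \in V then 2^-1 else 1))).
  by apply: funext => om; rewrite /Y -big_split.
rewrite Ex_prodg.
rewrite (eq_bigr (fun e => (if e \in U :&: V then p * (2^-1 * 2^-1) + (1 - p) else 1) *
   (if e \in U :\: V then p * 2^-1 + (1 - p) else 1) *
   (if e \in V :\: U then p * 2^-1 + (1 - p) else 1))); last first.
  move=> e _; rewrite !inE; case: (e \in U); case: (e \in V) => /=;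
  rewrite ?mulr1 ?mul1r //; by rewrite addrC subrK.
rewrite !big_split /= (prod_ind _ (fintype.subset_trans (finset.subsetIl U V) sU)).
rewrite (prod_ind _ (fintype.subset_trans (finset.subsetDl U V) sU)).
by rewrite (prod_ind _ (fintype.subset_trans (finset.subsetDl V U) sV)).
Qed.

Definition phi (R : realType) (p : R) := p * 2^-1 + (1 - p).
Definition bb (R : realType) (p : R) := p * (2^-1 * 2^-1) + (1 - p).

Lemma Y0 (R : realType) d om : Y R (finset.set0 : {set cube d * 'I_d}) om = 1.
Proof. by rewrite /Y big1 // => e _; rewrite finset.in_set0. Qed.

Lemma EY1 (R : realType) (p : R) d (U : {set cube d * 'I_d}) :
  U \subset hedges d -> Ex p (Y R U) = phi p ^+ #|U|.
Proof.
move=> sU.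
have -> : Y R U = (fun om => Y R U om * Y R finset.set0 om).
  by apply: funext => om; rewrite Y0 mulr1.
rewrite EY2 ?finset.sub0set // finset.setI0 finset.setD0 finset.set0D !cards0 !expr0 mul1r mulr1.
by [].
Qed.

Lemma Ex_sum (R : realType) (p : R) d (I : finType) (P : pred I)
  (F : I -> {set cube d * 'I_d} -> R) :
  Ex p (fun om => \sum_(i | P i) F i om) = \sum_(i | P i) Ex p (F i).
Proof.
rewrite /Ex; under eq_bigr do rewrite mulr_sumr; exact: exchange_big.
Qed.

Lemma Cov_sum (R : realType) (p : R) d (I J : finType) (P : pred I) (Q : pred J)
  (X : I -> {set cube d * 'I_d} -> R) (Z : J -> {set cube d * 'I_d} -> R) :
  Cov p (fun om => \sum_(i | P i) X i om) (fun om => \sum_(j | Q j) Z j om) =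
  \sum_(i | P i) \sum_(j | Q j) Cov p (X i) (Z j).
Proof.
rewrite /Cov.
have -> : (fun om => (\sum_(i | P i) X i om) * (\sum_(j | Q j) Z j om)) =
          (fun om => \sum_(i | P i) \sum_(j | Q j) X i om * Z j om).
  by apply: funext => om; rewrite mulr_suml; apply: eq_bigr => i _; rewrite mulr_sumr.
rewrite (Ex_sum p P X) (Ex_sum p Q Z) Ex_sum mulr_suml -sumrB; apply: eq_bigr => i _.
rewrite Ex_sum.
by rewrite mulr_sumr -sumrB.
Qed.

Lemma lo_eq d (v : cube d) i :
  (if v i then flip v i else v) = [ffun j => (j != i) && v j].
Proof.
apply/ffunP => j; rewrite ffunE; case: (eqVneq j i) => [->|ji] /=.
  by case vi: (v i) => //; rewrite /flip ffunE eqxx vi.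
by case: (v i) => //; rewrite /flip ffunE (negbTE ji).
Qed.

Lemma flip_invol d (v : cube d) i : flip (flip v i) i = v.
Proof.
by apply/ffunP => j; rewrite /flip !ffunE; case: eqVneq => //; rewrite negbK.
Qed.

Lemma inc_flip d (u : cube d) i : edge_of (flip u i) i = edge_of u i.
Proof.
rewrite /edge_of !lo_eq; congr pair; apply/ffunP => j; rewrite !ffunE.
by case: eqVneq => //= ji; rewrite /flip ffunE (negbTE ji).
Qed.

Lemma inc_meet d (u v : cube d) :
  u != v -> inc u :&: inc v = edge_of u @: [set i | v == flip u i].
Proof.
move=> nuv; apply/finset.setP => e; rewrite inE; apply/andP/imsetP.
  case=> /imsetP [i _ ->] /imsetP [j _ eq].
  have ij : i = j by move/(congr1 snd): eq.
  subst j; exists i => //; rewrite inE.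
  have H : forall k, k != i -> u k = v k.
    move: eq => /(congr1 fst) /=; rewrite !lo_eq => /ffunP H k ki.
    by have := H k; rewrite !ffunE ki.
  have : v i != u i.
    apply: contraNneq nuv => vi; apply/eqP/ffunP => k.
    by case: (eqVneq k i) => [->|ki]; [rewrite vi | rewrite H].
  move=> vui; apply/eqP/ffunP => k; rewrite /flip ffunE.
  case: (eqVneq k i) => [->|ki]; last by rewrite H.
  by move: vui; case: (v i); case: (u i).
case=> i; rewrite inE => /eqP -> ->; split.
  by apply: imset_f; rewrite finset.in_setT.
by rewrite -{1}inc_flip; apply: imset_f; rewrite finset.in_setT.
Qed.

Lemma kk_le1 d (u v : cube d) : (#|[set i | v == flip u i]| <= 1)%N.
Proof.
apply/card_le1_eqP => i j; rewrite !inE => /eqP -> /eqP /(congr1 (fun w : cube d => w i)).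
rewrite /flip !ffunE eqxx; case: (eqVneq i j) => // _.
by case: (u i).
Qed.

Lemma even_flip d (u : cube d) i : is_even (flip u i) = ~~ is_even u.
Proof.
rewrite /is_even /hweight (cardsD1 i [set j | flip u i j]) (cardsD1 i [set j | u j]).
have -> : [set j | flip u i j] :\ i = [set j | u j] :\ i.
  by apply/finset.setP => j; rewrite !inE /flip ffunE; case: eqVneq.
rewrite !inE /flip ffunE eqxx !oddD !oddb.
by case: (u i); case: (odd _).
Qed.

Lemma Ne_No d : (0 < d)%N ->
  #|[set v : cube d | is_even v]| = #|[set v : cube d | ~~ is_even v]|.
Proof.
move=> d0; pose i0 := Ordinal d0.
have -> : [set v : cube d | ~~ is_even v] = (fun v => flip v i0) @: [set v | is_even v].
  apply/finset.setP => v; rewrite inE; apply/idP/imsetP => [ov|[w]].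
    by exists (flip v i0); rewrite ?inE ?even_flip ?flip_invol.
  by rewrite inE => ew ->; rewrite even_flip ew.
by rewrite card_imset //; apply: (can_inj (g := fun v => flip v i0)) => v; rewrite flip_invol.
Qed.

Lemma Ne_No_sum d :
  (#|[set v : cube d | is_even v]| + #|[set v : cube d | ~~ is_even v]| = 2 ^ d)%N.
Proof.
have -> : [set v : cube d | ~~ is_even v] = ~: [set v | is_even v].
  by apply/finset.setP => v; rewrite !inE.
by rewrite cardsC card_ffun card_bool card_ord.
Qed.

Lemma CovY (R : realType) (p : R) d (u v : cube d) :
  Cov p (Y R (inc u)) (Y R (inc v)) =
  bb p ^+ #|inc u :&: inc v| * phi p ^+ (d - #|inc u :&: inc v|)
    * phi p ^+ (d - #|inc u :&: inc v|) - phi p ^+ d * phi p ^+ d.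
Proof.
rewrite /Cov EY2 ?inc_sub // !EY1 ?inc_sub // !cardsD card_inc.
by rewrite !card_inc [inc v :&: inc u]finset.setIC.
Qed.

Lemma sum_const_set (R : realType) (T : finType) (P : pred T) (c : R) :
  \sum_(v | P v) c = #|[set v | P v]|%:R * c.
Proof.
rewrite (eq_bigl (fun u => u \in [set v | P v])); last by move=> u; rewrite inE.
by rewrite sumr_const mulr_natl.
Qed.

Lemma Ex_Phi (R : realType) (p : R) d (P : pred (cube d)) :
  Ex p (fun om => \sum_(v | P v) Y R (inc v) om) = #|[set v | P v]|%:R * phi p ^+ d.
Proof.
rewrite Ex_sum (eq_bigr (fun _ => phi p ^+ d)); last first.
  by move=> v _; rewrite EY1 ?inc_sub ?card_inc.
exact: sum_const_set.
Qed.

Lemma Var_par (R : realType) (p : R) d (P : pred (cube d))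
  (hP : forall u i, P u -> ~~ P (flip u i)) :
  Cov p (fun om => \sum_(v | P v) Y R (inc v) om) (fun om => \sum_(v | P v) Y R (inc v) om)
  = #|[set v | P v]|%:R * (bb p ^+ d - phi p ^+ d * phi p ^+ d).
Proof.
rewrite Cov_sum.
rewrite (eq_bigr (fun u => bb p ^+ d - phi p ^+ d * phi p ^+ d)); last first.
  move=> u Pu; rewrite (bigD1 u) //= big1 ?addr0.
    by rewrite CovY finset.setIid card_inc subnn !expr0 !mulr1.
  move=> v /andP [Pv vu].
  have uv : u != v by rewrite eq_sym.
  rewrite CovY (inc_meet uv) (card_imset _ (@edge_inj d u)).
  have -> : [set i | v == flip u i] = finset.set0.
    apply/finset.setP => i; rewrite !inE; apply/negbTE.
    by apply: contraTN Pv => /eqP ->; exact: hP.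
  by rewrite cards0 !expr0 mul1r !subn0 subrr.
exact: sum_const_set.
Qed.

Lemma Cov_EO (R : realType) (p : R) d : (0 < d)%N ->
  Cov p (fun om => \sum_(v : cube d | is_even v) Y R (inc v) om)
        (fun om => \sum_(v : cube d | ~~ is_even v) Y R (inc v) om)
  = #|[set v : cube d | is_even v]|%:R * (d%:R *
     (bb p * phi p ^+ (d - 1) * phi p ^+ (d - 1) - phi p ^+ d * phi p ^+ d)).
Proof.
move=> d0; rewrite Cov_sum.
set c1 := (bb p * _ * _ - _).
rewrite (eq_bigr (fun u => d%:R * c1)); last first.
  move=> u eu.
  rewrite (eq_bigr (fun v => #|[set i | v == flip u i]|%:R * c1)); last first.
    move=> v ov.
    have uv : u != v by apply: contraNneq ov => <-.
    rewrite CovY (inc_meet uv) (card_imset _ (@edge_inj d u)).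
    have := kk_le1 u v; case: (#|[set i | v == flip u i]|) => [_|[_|//]].
      by rewrite !expr0 mul1r !subn0 subrr mul0r.
    by rewrite expr1 mul1r.
  rewrite -mulr_suml -natr_sum; congr (_%:R * _).
  transitivity (\sum_(v | ~~ is_even v) \sum_(i < d) nat_of_bool (v == flip u i)).
    apply: eq_bigr => v _; rewrite -sum1_card big_mkcond /=.
    by apply: eq_bigr => i _; rewrite inE; case: (v == flip u i).
  rewrite exchange_big /=.
  transitivity (\sum_(i < d) 1)%N.
    apply: eq_bigr => i _; rewrite (bigD1 (flip u i)) /=; last by rewrite even_flip eu.
    by rewrite eqxx big1 ?addn0 // => v /andP [_ /negbTE ->].
  by rewrite sum_nat_const card_ord muln1.
exact: sum_const_set.
Qed.

Lemma geom_bound (R : realType) (s : R) n : 0 <= s -> s < 1 ->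
  n.+1%:R * s ^+ n <= (1 - s)^-1.
Proof.
move=> s0 s1.
have hS : (1 - s) * \sum_(i < n.+1) s ^+ i = 1 - s ^+ n.+1.
  by rewrite -(opprB s 1) mulNr -subrX1 opprB.
have hl : n.+1%:R * s ^+ n <= \sum_(i < n.+1) s ^+ i.
  have <- : \sum_(i < n.+1) s ^+ n = n.+1%:R * s ^+ n.
    by rewrite sumr_const card_ord mulr_natl.
  apply: ler_sum => i _; apply: ler_wiXn2l => //; first exact: ltW.
  by rewrite -ltnS; exact: ltn_ord.
apply: (le_trans hl).
rewrite -[(1 - s)^-1]mulr1 ler_pdivlMl ?subr_gt0 // hS.
have : 0 <= s ^+ n.+1 by rewrite exprn_ge0.
lra.
Qed.

Lemma ratio_bound (R : realType) (a b : R) n : 0 < a -> a < b ->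
  0 <= n.+1%:R * (a ^+ n * (b - a)) / (b ^+ n.+1 - a ^+ n.+1) /\
  n.+1%:R * (a ^+ n * (b - a)) / (b ^+ n.+1 - a ^+ n.+1) <= n.+1%:R * (a / b) ^+ n.
Proof.
move=> a0 ab.
have b0 : 0 < b by apply: lt_trans ab.
have hD : 0 < b ^+ n.+1 - a ^+ n.+1 by rewrite subr_gt0 ltrXn2r ?ltW.
have h1 : a ^+ n <= b ^+ n by apply: lerXn2r; rewrite ?nnegrE ?ltW.
have h2 : b ^+ n * (b - a) <= b ^+ n.+1 - a ^+ n.+1.
  rewrite !exprS; nra.
split.
  apply: divr_ge0; last exact: ltW.
  apply: mulr_ge0; first exact: ler0n.
  by apply: mulr_ge0; [rewrite exprn_ge0 // ltW | rewrite subr_ge0 ltW].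
rewrite ler_pdivrMr // -mulrA ler_wpM2l //.
have e : a ^+ n * (b - a) = (a / b) ^+ n * (b ^+ n * (b - a)).
  by rewrite expr_div_n; field; rewrite expf_neq0 // gt_eqF.
rewrite e; apply: ler_wpM2l => //.
by rewrite exprn_ge0 // divr_ge0 // ltW.
Qed.

Local Open Scope classical_set_scope.

Theorem lemma3p4 (R : realType) (p : R) (hp0 : 0 < p) (hp1 : p < 1) :
  (* 1. expectations *)
  (forall d : nat, (0 < d)%N ->
     Ex p (@PhiEven R d) = 2^-1 * (2 - p) ^+ d /\
     Ex p (@PhiOdd R d) = 2^-1 * (2 - p) ^+ d) /\
  (* 2. variances *)
  (forall d : nat, (0 < d)%N -> Var p (@PhiEven R d) = Var p (@PhiOdd R d)) /\
  (Var p (@PhiEven R d) / (2^-1 * ((4 - 3 * p) / 2) ^+ d)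
     @[d --> \oo] --> (1 : R)) /\
  (* 3. exponential decay of Cov / Var *)
  (exists (C q : R), 0 < q /\ q < 1 /\
     forall d : nat, (0 < d)%N ->
       `| Cov p (@PhiEven R d) (@PhiOdd R d) / Var p (@PhiEven R d) | <= C * q ^+ d).
Proof.
have hE : forall d, @PhiEven R d = (fun om => \sum_(v : cube d | is_even v) Y R (inc v) om).
  by move=> d; apply: funext => om; rewrite /PhiEven; apply: eq_bigr => v _; rewrite X_Y.
have hO : forall d, @PhiOdd R d = (fun om => \sum_(v : cube d | ~~ is_even v) Y R (inc v) om).
  by move=> d; apply: funext => om; rewrite /PhiOdd; apply: eq_bigr => v _; rewrite X_Y.
have hVE : forall d, Var p (@PhiEven R d) =
    #|[set v : cube d | is_even v]%SET|%:R * (bb p ^+ d - phi p ^+ d * phi p ^+ d).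
  move=> d; rewrite /Var hE (@Var_par R p d (fun v => is_even v)) //.
  by move=> u i; rewrite even_flip negbK.
have hVO : forall d, Var p (@PhiOdd R d) =
    #|[set v : cube d | ~~ is_even v]%SET|%:R * (bb p ^+ d - phi p ^+ d * phi p ^+ d).
  move=> d; rewrite /Var hO (@Var_par R p d (fun v => ~~ is_even v)) //.
  by move=> u i; rewrite even_flip negbK.
have hNe : forall d, (0 < d)%N ->
    #|[set v : cube d | is_even v]%SET|%:R = 2^-1 * (2:R) ^+ d :> R.
  move=> d d0; have h := Ne_No_sum d; rewrite -(Ne_No d0) in h.
  have e : (#|[set v : cube d | is_even v]%SET|%:R : R) * 2 = 2 ^+ d.
    by rewrite -natrX -h natrD; ring.
  by rewrite -e; field.
have phiE : phi p = (2 - p) / 2 by rewrite /phi; field.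
have bbE : bb p = (4 - 3 * p) / 4 by rewrite /bb; field.
have phi0 : 0 < phi p by rewrite /phi; lra.
have bb0 : 0 < bb p by rewrite /bb; lra.
have ab : phi p * phi p < bb p by rewrite /phi /bb; nra.
have a0 : 0 < phi p * phi p by apply: mulr_gt0.
set r := phi p * phi p / bb p.
have r0 : 0 <= r by rewrite /r divr_ge0 // ltW.
have r1 : r < 1 by rewrite /r ltr_pdivrMr // mul1r.
split.
  move=> d d0; rewrite hE hO !Ex_Phi -(Ne_No d0) hNe // phiE expr_div_n.
  by split; field; rewrite expf_neq0.
split.
  by move=> d d0; rewrite hVE hVO (Ne_No d0).
split.
  have eq : forall d, Var p (@PhiEven R d) / (2^-1 * ((4 - 3 * p) / 2) ^+ d) = 1 - r ^+ d.
    case=> [|n].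
      by rewrite hVE !expr0 !mulr1 !subrr mulr0 mul0r.
    rewrite hVE hNe //.
    have -> : (4 - 3 * p) / 2 = 2 * bb p by rewrite bbE; field.
    rewrite /r !exprMn exprVn; field.
    by rewrite !expf_neq0 // gt_eqF.
  rewrite (eq_cvg _ _ eq).
  have hr : `|r| < 1 by rewrite ger0_norm.
  have := cvgB (cvg_cst (1:R)) (cvg_expr hr).
  rewrite subr0.
  by move=> H; apply: H; exact: _.
pose q := (1 + r) / 2.
pose s := r / q.
have q0 : 0 < q by rewrite /q; lra.
have q1 : q < 1 by rewrite /q; lra.
have s0 : 0 <= s by rewrite /s divr_ge0 // ltW.
have s1 : s < 1 by rewrite /s ltr_pdivrMr // mul1r /q; lra.
exists ((1 - s) * q)^-1, q; split => //; split => //.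
case=> [//|n] _.
rewrite hVE hE hO Cov_EO // subn1 /=.
have Ne0 : (#|[set v : cube n.+1 | is_even v]%SET|%:R : R) != 0.
  by rewrite hNe // mulf_neq0 // ?invr_eq0 expf_neq0.
set Ne := (#|[set v : cube n.+1 | is_even v]%SET|%:R : R) in Ne0 *.
have [h0 h1] := ratio_bound n a0 ab.
have hD : bb p ^+ n.+1 - phi p ^+ n.+1 * phi p ^+ n.+1 != 0.
  by rewrite -exprMn subr_eq0 gt_eqF // ltrXn2r ?ltW.
have e : Ne * (n.+1%:R * (bb p * phi p ^+ n * phi p ^+ n - phi p ^+ n.+1 * phi p ^+ n.+1))
   / (Ne * (bb p ^+ n.+1 - phi p ^+ n.+1 * phi p ^+ n.+1))
   = n.+1%:R * ((phi p * phi p) ^+ n * (bb p - phi p * phi p))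
   / (bb p ^+ n.+1 - (phi p * phi p) ^+ n.+1).
  rewrite !exprMn; move: hD; rewrite !exprS => hD; field.
  by rewrite hD Ne0.
rewrite e ger0_norm //; apply: (le_trans h1).
have -> : phi p * phi p / bb p = s * q by rewrite /s divfK ?gt_eqF.
rewrite exprMn mulrA.
have -> : ((1 - s) * q)^-1 * q ^+ n.+1 = (1 - s)^-1 * q ^+ n.
  by rewrite exprS; field; rewrite !gt_eqF // subr_gt0.
by apply: ler_wpM2r; [rewrite exprn_ge0 // ltW | exact: geom_bound].
Qed.
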